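(* For every integer $m\ge1$, the binary reflected Gray code ${\boldsymbol{B}}_m$ and the natural binary code ${\boldsymbol{N}}_m$ of order $m$ belong to the same modified Hadamard class.
   Context: Let $M=2^m$. The natural binary code (NBC) of order $m$ is the $M\times m$ binary matrix ${\boldsymbol{N}}_m$ whose $q$th row $\boldsymbol{n}_q=[n_{q,1},\ldots,n_{q,m}]$ is the base-2 representation of $q-1$, with $n_{q,m}$ the least significant bit. The binary reflected Gray code (BRGC) of order $m$ is the $M\times m$ matrix ${\boldsymbol{B}}_m$ with rows $\boldsymbol{b}_q$ given by $b_{q,1}=n_{q,1}$ and $b_{q,l}=n_{q,l-1}\oplus n_{q,l}$ for $l=2,\ldots,m$. A labeling is an $M\times m$ binary matrix with pairwise distinct rows; its columns are then nonzero. The first nonzero entry of a column is its pivot. A binary labeling matrix ${\boldsymbol{L}}$ is a reduced column echelon matrix if (1) every row containing a pivot has all its other entries zero, and (2) the pivot of column $l$ lies in a row below the pivot of column $l+1$, for $l=1,\ldots,m-1$. Every labeling ${\boldsymbol{L}}$ factors uniquely as ${\boldsymbol{L}}={\boldsymbol{L}}_{\mathrm{R}}{\boldsymbol{T}}$ with ${\boldsymbol{L}}_{\mathrm{R}}$ a reduced column echelon matrix and ${\boldsymbol{T}}$ an invertible $m\times m$ binary matrix (over GF(2)). The modified Hadamard class associated with a reduced column echelon matrix ${\boldsymbol{L}}_{\mathrm{R}}$ is the set $\{{\boldsymbol{L}}_{\mathrm{R}}{\boldsymbol{T}}:{\boldsymbol{T}}\text{ invertible }m\times m\text{ binary}\}$.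 *)

(* Defs.v *)
From mathcomp Require Import all_boot all_order all_algebra.
Set Implicit Arguments. Unset Strict Implicit. Unset Printing Implicit Defensive.
Import GRing.Theory.
Local Open Scope ring_scope.

(* Rows are indexed by i : 'I_(2^m) (i = q-1), columns by j : 'I_m (j = l-1). *)

(* Natural binary code: row i is base-2 representation of i, column m-1 the LSB;
   column j (l = j+1) holds the bit of weight 2^(m-1-j). *)
(* n_{q,l} with q = i+1, l = j+1: the bit of weight 2^(m-l) of q-1. *)
Definition nbc_bit (m i j : nat) : 'F_2 := (odd (i %/ 2 ^ (m.-1 - j)))%:R.

Definition NBC (m : nat) : 'M['F_2]_(2 ^ m, m) :=
  \matrix_(i < 2 ^ m, j < m) nbc_bit m i j.

(* Binary reflected Gray code: b_{q,1} = n_{q,1}, b_{q,l} = n_{q,l-1} xor n_{q,l}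
   (xor is addition in 'F_2). *)
Definition BRGC (m : nat) : 'M['F_2]_(2 ^ m, m) :=
  \matrix_(i < 2 ^ m, j < m)
    (if j == 0%N :> nat then nbc_bit m i j
     else nbc_bit m i j.-1 + nbc_bit m i j).

Definition labeling (M m : nat) (L : 'M['F_2]_(M, m)) : Prop :=
  forall i i' : 'I_M, row i L = row i' L -> i = i'.

Definition is_pivot (M m : nat) (L : 'M['F_2]_(M, m)) (i : 'I_M) (j : 'I_m) : Prop :=
  L i j != 0 /\ forall i' : 'I_M, (i' < i)%N -> L i' j = 0.

Definition reduced_col_echelon (M m : nat) (L : 'M['F_2]_(M, m)) : Prop :=
  labeling L /\
  (forall (i : 'I_M) (j j' : 'I_m), is_pivot L i j -> j' != j -> L i j' = 0) /\
  (forall (j j' : 'I_m) (i i' : 'I_M), j'= j.+1 :> nat ->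
      is_pivot L i j -> is_pivot L i' j' -> (i' < i)%N).

Definition mod_hadamard_class (M m : nat) (LR : 'M['F_2]_(M, m)) (L : 'M['F_2]_(M, m)) : Prop :=
  exists T : 'M['F_2]_m, T \in unitmx /\ L = LR *m T.

(* Main.v *)
Require Import Defs.
From mathcomp Require Import all_boot all_order all_algebra.
From mathcomp Require Import zify.
Import GRing.Theory.

Lemma F2b (b : bool) : ((b%:R : 'F_2) != 0)%R = b.
Proof. by case: b; rewrite ?oner_neq0 ?eqxx. Qed.

Lemma F2inj (a b : bool) : (a%:R : 'F_2)%R = b%:R%R -> a = b.
Proof. by move=> H; rewrite -(F2b a) -(F2b b) H. Qed.

Lemma div_step i e : i %/ 2 ^ e = odd (i %/ 2 ^ e) + (i %/ 2 ^ e.+1).*2.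
Proof. by rewrite expnSr divnMA divn2 odd_double_half. Qed.

Lemma nbc_inj m (i i' : nat) : i < 2 ^ m -> i' < 2 ^ m ->
  (forall e, e < m -> odd (i %/ 2 ^ e) = odd (i' %/ 2 ^ e)) -> i = i'.
Proof.
move=> hi hi' H.
have: forall k, k <= m -> i %/ 2 ^ (m - k) = i' %/ 2 ^ (m - k).
  elim=> [|k IH] hk.
    by rewrite subn0 !divn_small.
  rewrite (div_step i) (div_step i') H; last by lia.
  have -> : (m - k.+1).+1 = m - k by lia.
  by rewrite IH //; lia.
by move=> /(_ m (leqnn m)); rewrite subnn expn0 !divn1.
Qed.

Lemma odd_pow_div e e' : e != e' -> odd (2 ^ e %/ 2 ^ e') = false.
Proof.
move=> ne; case: (ltnP e e') => h.
  by rewrite divn_small // ltn_exp2l.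
have h' : e' < e by rewrite ltn_neqAle eq_sym ne.
have -> : 2 ^ e = 2 ^ (e - e') * 2 ^ e' by rewrite -expnD subnK.
rewrite mulnK ?expn_gt0 // oddX /=; apply/negbTE; rewrite negb_or /=.
by rewrite subn_eq0 -ltnNge h'.
Qed.

Lemma pivot_nbc m (i : 'I_(2 ^ m)) (j : 'I_m) :
  is_pivot (NBC m) i j -> (i : nat) = 2 ^ (m.-1 - j).
Proof.
case=> nz low; move: nz; rewrite mxE /nbc_bit F2b => od.
set e := m.-1 - j in od low *.
have he : e < m by rewrite /e; have := ltn_ord j; lia.
have pe : 2 ^ e <= i.
  by rewrite -divn_gt0 ?expn_gt0 //; case: (i %/ 2 ^ e) od.
case: (ltnP (2 ^ e) i) => h; last by apply/eqP; rewrite eqn_leq h pe.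
have hm : 2 ^ e < 2 ^ m by rewrite ltn_exp2l.
have := low (Ordinal hm) h; rewrite mxE /nbc_bit -/e /= divnn expn_gt0 /=.
by move/eqP; rewrite oner_eq0.
Qed.

Theorem theorem3 (m : nat) (hm : (1 <= m)%N) :
  exists LR : 'M['F_2]_(2 ^ m, m),
    reduced_col_echelon LR /\
    mod_hadamard_class LR (BRGC m) /\ mod_hadamard_class LR (NBC m).
Proof.
exists (NBC m); split; [|split].
- split; [|split].
  + move=> i i' H; apply/val_inj; apply: (nbc_inj _ _ _ (ltn_ord i) (ltn_ord i')) => e he.
    have hj : m.-1 - e < m by lia.
    have := congr1 (fun r : 'M['F_2]_(1, m) => r ord0 (Ordinal hj)) H; rewrite !mxE /nbc_bit /=.
    have -> : m.-1 - (m.-1 - e) = e by lia.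
    exact: F2inj.
  + move=> i j j' P ne; rewrite mxE /nbc_bit (pivot_nbc _ _ _ P) odd_pow_div //.
    apply/eqP => E; move/eqP: ne; apply; apply/val_inj => /=.
    have := ltn_ord j; have := ltn_ord j'; lia.
  + move=> j j' i i' E P P'; rewrite (pivot_nbc _ _ _ P) (pivot_nbc _ _ _ P') ltn_exp2l //.
    have := ltn_ord j'; lia.
- pose S : 'M['F_2]_m := (\matrix_(k < m, j < m) ((k.+1 == j :> nat)%:R))%R.
  exists (1%:M + S)%R; split.
  + rewrite unitmxE -det_tr det_trig.
      rewrite big1 ?unitr1 // => k _; rewrite !mxE eqxx /=.
      have -> : (k.+1 == k :> nat) = false by lia.
      by rewrite addr0.
    apply/is_trig_mxP => a b ab; rewrite !mxE.
    have -> : (b == a) = false by apply/negbTE; rewrite neq_ltn ab orbT.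
    have -> : (b.+1 == a :> nat) = false by lia.
    by rewrite addr0.
  + rewrite mulmxDr mulmx1; apply/matrixP => i j; rewrite !mxE.
    case: eqP => [j0|jn0].
      rewrite big1 ?addr0 // => k _; rewrite !mxE j0 /= mulr0 //.
    have hk : j.-1 < m by have := ltn_ord j; lia.
    rewrite (bigD1 (Ordinal hk)) //= big1.
      rewrite !mxE /=; have -> : (j.-1).+1 == j by apply/eqP; lia.
      by rewrite mulr1 addr0 addrC.
    move=> k kn; rewrite !mxE.
    have -> : (k.+1 == j :> nat) = false.
      apply/negbTE; apply: contra kn => /eqP E; apply/eqP/val_inj => /=; lia.
    by rewrite mulr0.
- exists 1%:M%R; split; [exact: unitmx1 | by rewrite mulmx1].
Qed.
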